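(* Under the hypotheses of the context, let $U$ be an integer with $U\delta\ge\bot_0+D+1$. Then for every process $p$, in the configuration $\gamma_{t_{p,U\delta+\varrho}}$ (i.e., at $p$'s event in the cut $C_{U\delta+\varrho}$), $p.v_2=\bigoplus\{q.v_0: q\in V(p,\varrho)\}$, the infimum of the registers $v_0$ over the $\varrho$-ball centered at $p$.
   Context: Let $G=(V,E)$ be a finite connected undirected graph, $|V|=n\ge 2$, $\mathcal N_p$ the set of neighbors of $p$, $d(p,q)$ the hop distance, $D$ the diameter, and $V(p,r)=\{q\in V: d(p,q)\le r\}$. Fix integers $\varrho\ge1$, $\delta=\varrho+1$, and $M\ge3$ a multiple of $\delta$; for an integer $a$, $\bar a\in\{0,\dots,M-1\}$ is its residue modulo $M$. Each process $p$ holds a clock $p.r\in\{0,\dots,M-1\}$; $p^t.r$ is its value in $\gamma_t$. Integers $a,b$ are locally comparable if $\min(\overline{a-b},\overline{b-a})\le1$, and then $b\ominus a=\overline{b-a}$ if $\overline{b-a}\le1$, else $-\overline{a-b}$. $WU$: for every edge $\{p,q\}$, $p.r,q.r$ are locally comparable. The delay of a path $p_0\ldots p_k$ is $\sum_{i<k}(p_{i+1}.r\ominus p_i.r)$. $WU_0$: $WU$ holds and all paths between any $p,q$ have the same delay $\delta_{(p,q)}$ ($\delta^t_{(p,q)}$ in $\gamma_t$). Let $\oplus$ be an associative, commutative, idempotent binary operation on a set $\mathbb S$; $\bigoplus$ of a finite nonempty set is the $\oplus$ of its elements. Each process $p$ has registers $p.v_0,p.v_1,p.v_2\in\mathbb S$,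 where $p.v_0$ is never modified. Dynamics: $p$ is enabled iff for every $q\in\mathcal N_p$, $q.r=p.r$ or $q.r=\overline{p.r+1}$. In a transition $\gamma_t\to\gamma_{t+1}$ a nonempty set of processes enabled in $\gamma_t$ is chosen (by an arbitrary daemon); each chosen $p$, reading the values of $\gamma_t$, does: if $p.r\equiv\varrho \pmod\delta$ then $p.v_1:=p.v_0$, $p.v_2:=p.v_0$; otherwise $p.v_1:=p.v_2$ and $p.v_2:=p.v_0\oplus\bigoplus\{q.v_{\omega(q)}:q\in\mathcal N_p\}$, where $\omega(q)=2$ if $q.r=p.r$ and $\omega(q)=1$ if $q.r=\overline{p.r+1}$; then $p.r:=\overline{p.r+1}$. Other processes are unchanged. Standing hypotheses: the execution $\gamma_0\gamma_1\ldots$ is infinite, $\gamma_0$ satisfies $WU_0$, and every process increments its clock infinitely often. Lifting: choose $p_0$ with $\delta^0_{(p_0,q)}\ge0$ for all $q$, let $\bot_0=p_0^0.r$, set $\widetilde{p^0.r}=\bot_0+\delta^0_{(p_0,p)}$, and $\widetilde{p^{t+1}.r}=\widetilde{p^t.r}+1$ if $p$ increments in $\gamma_t\to\gamma_{t+1}$, else $\widetilde{p^{t+1}.r}=\widetilde{p^t.r}$. For an integer $k$, $t_{p,k}$ is the smallest $t$ with $\widetilde{p^t.r}=k$, and $C_k=\{(p,t_{p,k}):p\in V\}$. *)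

(* Defs.v *)
From HB Require Import structures.
From mathcomp Require Import all_boot all_order all_algebra.
Set Implicit Arguments. Unset Strict Implicit. Unset Printing Implicit Defensive.
Import Order.TTheory GRing.Theory Num.Theory.

(* [inball e r p q] : there is a walk p = p_0 ... p_k = q with k <= r,
   i.e. d(p,q) <= r, i.e. q \in V(p,r). *)
Definition inball (V : finType) (e : rel V) (r : nat) (p q : V) : bool :=
  [exists k : 'I_r.+1, [exists s : k.-tuple V, path e p s && (last p s == q)]].

Definition is_diameter (V : finType) (e : rel V) (D : nat) : Prop :=
  (forall p q, inball e D p q) /\
  (forall D', (forall p q, inball e D' p q) -> D <= D').

Definition resM (M : nat) (a : int) : nat := `|(a %% Posz M)%Z|%N.

Definition loc_comparable (M : nat) (a b : int) : bool :=
  (minn (resM M (a - b)%R) (resM M (b - a)%R) <= 1)%N.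

Definition ominus (M : nat) (b a : int) : int :=
  if (resM M (b - a)%R <= 1)%N then Posz (resM M (b - a)%R) else (- Posz (resM M (a - b)%R))%R.

Record conf (V : Type) (S : Type) := Conf {
  cr : V -> nat;
  cv1 : V -> S;
  cv2 : V -> S
}.

Fixpoint delay (M : nat) (V : Type) (r : V -> nat) (p : V) (s : seq V) : int :=
  match s with
  | [::] => 0%R
  | q :: s' => (ominus M (Posz (r q)) (Posz (r p)) + delay M r q s')%R
  end.

Definition WU (M : nat) (V : finType) (e : rel V) (r : V -> nat) : Prop :=
  forall p q, e p q -> loc_comparable M (Posz (r p)) (Posz (r q)).

Definition WU0 (M : nat) (V : finType) (e : rel V) (r : V -> nat) : Prop :=
  WU M e r /\
  forall p s1 s2, path e p s1 -> path e p s2 -> last p s1 = last p s2 ->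
    delay M r p s1 = delay M r p s2.

Definition enabled (M : nat) (V : finType) (e : rel V) (r : V -> nat) (p : V) : bool :=
  [forall q, e p q ==> ((r q == r p) || (r q == (r p).+1 %% M))].

Definition step (M rho : nat) (V : finType) (e : rel V) (S : Type)
    (op : S -> S -> S) (v0 : V -> S) (ch : {set V}) (c : conf V S) : conf V S :=
  let r := cr c in
  let vom q p := (* q.v_{omega(q)} as seen by p *)
    if r q == r p then cv2 c q else cv1 c q in
  Conf
    (fun p => if p \in ch then (r p).+1 %% M else r p)
    (fun p => if p \in ch then
                (if r p %% rho.+1 == rho then v0 p else cv2 c p)
              else cv1 c p)
    (fun p => if p \in ch then
                (if r p %% rho.+1 == rho then v0 p
                 else foldr op (v0 p) [seq vom q p | q <- enum (e p)])
              else cv2 c p).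

(* Main.v *)
Require Import Defs.
From HB Require Import structures.
From mathcomp Require Import all_boot all_order all_algebra.
Import Order.TTheory GRing.Theory Num.Theory.

Section Idem.
Variables (S : Type) (op : S -> S -> S) (opA : associative op) (opC : commutative op)
  (opI : idempotent_op op).
Local Notation oop := (oAC opA opC).

Lemma oopI : idempotent_op oop.
Proof. by case=> // x; rewrite oACE opI. Qed.

Lemma oopA : associative oop.
Proof. by move=> [x|] [y|] [z|] //; rewrite !oACE opA. Qed.
Lemma oopC : commutative oop.
Proof. by move=> [x|] [y|] //; rewrite !oACE opC. Qed.

Variable (V : finType) (F : V -> option S).

Lemma big_absorb (P Q : pred V) :
  oop (\big[oop/None]_(y | P y && Q y) F y) (\big[oop/None]_(y | Q y) F y)
  = \big[oop/None]_(y | Q y) F y.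
Proof.
have E : \big[oop/None]_(y | Q y) F y =
  oop (\big[oop/None]_(y | P y && Q y) F y) (\big[oop/None]_(y | Q y && ~~ P y) F y).
  rewrite (bigID P) /=; congr oop; apply: eq_bigl => y; by rewrite andbC.
by rewrite E oopA oopI.
Qed.

Lemma big_union (P Q : pred V) :
  \big[oop/None]_(y | P y || Q y) F y =
  oop (\big[oop/None]_(y | P y) F y) (\big[oop/None]_(y | Q y) F y).
Proof.
rewrite [in RHS](bigID Q P) /= -oopA.
rewrite [oop (\big[oop/None]_(i | P i && ~~ Q i) F i) _]oopC oopA big_absorb.
rewrite (bigID Q) /=.
congr oop; apply: eq_bigl => y; by case: (P y); case: (Q y).
Qed.

Lemma big_has (T : Type) (R : T -> V -> bool) (s : seq T) :
  \big[oop/None]_(y | has (fun x => R x y) s) F y =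
  foldr oop None [seq \big[oop/None]_(y | R x y) F y | x <- s].
Proof.
elim: s => [|x s IH] /=; first by rewrite big_pred0.
by rewrite big_union IH.
Qed.
Lemma some_foldr (a : S) (l : seq S) :
  Some (foldr op a l) = oop (Some a) (foldr oop None (map Some l)).
Proof.
elim: l => [|x l IH] /=; first by rewrite /oAC.
by rewrite -oACE IH oopA (oopC (Some x)) -oopA.
Qed.
End Idem.

Section Ball.
Variables (V : finType) (e : rel V).

Lemma inballP r p q :
  reflect (exists s, [/\ path e p s, last p s = q & size s <= r]) (inball e r p q).
Proof.
apply: (iffP existsP).
  move=> [k /existsP [s /andP [Hp /eqP Hl]]].
  by exists (tval s); split => //; rewrite size_tuple -ltnS ltn_ord.
move=> [s [Hp Hl Hs]].
have Hk : size s < r.+1 by [].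
exists (Ordinal Hk); apply/existsP; exists (in_tuple s) => /=.
by rewrite Hp Hl eqxx.
Qed.

Lemma inball0 p q : inball e 0 p q = (q == p).
Proof.
apply/inballP/eqP.
  by move=> [[|x s] [_ Hl Hs]].
by move=> ->; exists [::].
Qed.

Lemma inballS r p q :
  inball e r.+1 p q = (q == p) || has (fun x => inball e r x q) (enum (e p)).
Proof.
apply/inballP/orP.
  move=> [[|x s] [Hp Hl Hs]]; first by left; rewrite -Hl.
  right; apply/hasP; exists x.
    by rewrite mem_enum; case/andP: Hp.
  apply/inballP; exists s; split => //; by case/andP: Hp.
move=> [/eqP ->|/hasP [x]]; first by exists [::].
rewrite mem_enum => Hx /inballP [s [Hp Hl Hs]].
by exists (x :: s); split => //=; rewrite Hp andbT; exact: Hx.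
Qed.
End Ball.
Section DelaySec.
Local Open Scope ring_scope.

Section Delay.
Variables (M : nat) (V : Type) (r : V -> nat).

Lemma ominus_le1 b a : ominus M b a <= 1.
Proof.
rewrite /ominus; case: ifP => H; first by rewrite lez_nat.
by apply: (le_trans (y:=0)); rewrite ?oppr_le0.
Qed.

Lemma delay_le_size p s : delay M r p s <= Posz (size s).
Proof.
elim: s p => [|x s IH] p //=.
rewrite -addn1 PoszD addrC lerD //; exact: ominus_le1.
Qed.

Lemma delay_rcons p s x :
  delay M r p (rcons s x) = delay M r p s + ominus M (Posz (r x)) (Posz (r (last p s))).
Proof.
elim: s p => [|y s IH] p /=; first by rewrite addr0 add0r.
by rewrite IH addrA.
Qed.

Hypothesis M_gt0 : (0 < M)%N.

Lemma resME a : Posz (resM M a) = (a %% Posz M)%Z.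
Proof. by rewrite /resM gez0_abs // modz_ge0 // -lt0n. Qed.

Lemma ominus_mod b a : ((a + ominus M b a) %% Posz M)%Z = (b %% Posz M)%Z.
Proof.
rewrite /ominus; case: ifP => _; rewrite resME.
  by rewrite (modzDmr a (b - a) M) addrC subrK.
rewrite -(modzDmr a (- ((a - b) %% M)%Z) M) modzNm modzDmr.
by rewrite opprB addrC subrK.
Qed.

Lemma delay_mod p s :
  ((Posz (r p) + delay M r p s) %% Posz M)%Z = (Posz (r (last p s)) %% Posz M)%Z.
Proof.
elim: s p => [|x s IH] p /=; first by rewrite addr0.
by rewrite addrA -modzDml ominus_mod modzDml IH.
Qed.
End Delay.
End DelaySec.

Lemma modn_neq M m k : 0 < k < M -> (m + k) %% M != m %% M.
Proof.
move=> /andP [k0 kM].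
have := eqn_modDl m k 0 M; rewrite addn0 => ->.
by rewrite mod0n modn_small // -lt0n.
Qed.

Lemma key_clk M a b : 2 < M -> b <= a.+1 -> a <= b.+1 ->
  (b %% M == a %% M) || (b %% M == (a %% M).+1 %% M) ->
  b = a \/ (b = a.+1 /\ b %% M != a %% M).
Proof.
move=> M3 h1 h2.
have SM : forall m, (m %% M).+1 %% M = m.+1 %% M.
  by move=> m; rewrite -addn1 modnDml addn1.
rewrite SM.
case: (ltngtP a b) => Hab.
- have -> : b = a.+1 by apply/eqP; rewrite eqn_leq h1 Hab.
  by right; split => //; rewrite -addn1 modn_neq // (leq_trans _ M3).
- have -> : a = b.+1 by apply/eqP; rewrite eqn_leq h2 Hab.
  have n1 := modn_neq M b 1; have n2 := modn_neq M b 2.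
  rewrite addn1 in n1; rewrite addn2 in n2.
  rewrite eq_sym (negbTE (n1 _)) ?(leq_trans _ M3) //= eq_sym (negbTE (n2 _)) //.
- by left.
Qed.

Theorem mainTheorem6
  (* graph *)
  (V : finType) (e : rel V)
  (e_sym : symmetric e) (e_irr : irreflexive e)
  (e_conn : forall p q : V, connect e p q) (n_ge2 : 2 <= #|V|)
  (D : nat) (HD : is_diameter e D)
  (* parameters: delta = rho.+1 *)
  (rho M : nat) (rho_ge1 : 1 <= rho) (M_ge3 : 3 <= M) (dvd_M : rho.+1 %| M)
  (* the semilattice operation *)
  (S : Type) (op : S -> S -> S)
  (opA : associative op) (opC : commutative op) (opI : idempotent_op op)
  (v0 : V -> S)
  (* the execution, with the daemon's choices *)
  (gam : nat -> conf V S) (ch : nat -> {set V})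
  (Hch_nonempty : forall t, ch t != set0)
  (Hch_enabled : forall t p, p \in ch t -> enabled M e (cr (gam t)) p)
  (Hstep : forall t, gam t.+1 = step M rho e op v0 (ch t) (gam t))
  (Hrange0 : forall p, cr (gam 0%N) p < M)
  (HWU0 : WU0 M e (cr (gam 0%N)))
  (Hfair : forall p t, exists2 t', t <= t' & p \in ch t')
  (* lifting *)
  (p0 : V)
  (Hp0 : forall s, path e p0 s -> (0 <= delay M (cr (gam 0%N)) p0 s)%R)
  (lr : nat -> V -> int)
  (Hlr0 : forall p s, path e p0 s -> last p0 s = p ->
            lr 0 p = (Posz (cr (gam 0%N) p0) + delay M (cr (gam 0%N)) p0 s)%R)
  (HlrS : forall t p, lr t.+1 p = (lr t p + Posz (p \in ch t))%R)
  (* the statement *)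
  (U : int)
  (HU : (Posz (cr (gam 0%N) p0) + Posz D + 1 <= U * Posz rho.+1)%R)
  (p : V) (t : nat)
  (Ht : lr t p = (U * Posz rho.+1 + Posz rho)%R)
  (Ht_min : forall t', (t' < t)%N -> lr t' p <> (U * Posz rho.+1 + Posz rho)%R) :
  Some (cv2 (gam t) p) =
    \big[oAC opA opC/None]_(q | inball e rho p q) Some (v0 q).
Proof.
have M_gt0 : 0 < M by apply: leq_trans M_ge3.
have path_to : forall q, exists s, path e p0 s /\ last p0 s = q.
  by move=> q; case/connectP: (e_conn p0 q) => s Hs ->; exists s.
have lr_ge0 : forall k q, (0 <= lr k q)%R.
  elim=> [|k IH] q.
    have [s [Hs Hl]] := path_to q.
    by rewrite (Hlr0 _ _ Hs Hl) addr_ge0 // Hp0.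
  by rewrite HlrS addr_ge0.
set L := fun t q => `|lr t q|%N.
have HL : forall k q, lr k q = Posz (L k q).
  by move=> k q; rewrite /L gez0_abs.
have HLS : forall k q, L k.+1 q = L k q + (q \in ch k).
  by move=> k q; apply/eqP; rewrite -eqz_nat PoszD -!HL HlrS.
have I1 : forall k q, cr (gam k) q = L k q %% M.
  elim=> [|k IH] q.
    have [s [Hs Hl]] := path_to q.
    apply/eqP; rewrite -eqz_nat -modz_nat -HL (Hlr0 _ _ Hs Hl) delay_mod // Hl.
    by rewrite modz_small // ltz_nat Hrange0.
  rewrite Hstep /= HLS IH; case: (q \in ch k) => /=.
    by rewrite -addn1 modnDml addn1.
  by rewrite addn0.
have NB : forall k, (forall q x, e q x -> L k x <= (L k q).+1) ->
    forall q x, q \in ch k -> e q x ->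
    L k x = L k q \/ (L k x = (L k q).+1 /\ cr (gam k) x != cr (gam k) q).
  move=> k I2k q x Hq Hex.
  have H := Hch_enabled k q Hq.
  move/forallP/(_ x)/implyP/(_ Hex): H; rewrite !I1 => H.
  have Hxq : e x q by rewrite e_sym.
  case: (key_clk _ _ _ M_ge3 (I2k _ _ Hex) (I2k _ _ Hxq) H) => [->|[-> Hn]]; first by left.
  by right; split => //; rewrite !I1.
have I2 : forall k q x, e q x -> L k x <= (L k q).+1.
  elim=> [|k IH] q x Hex.
    have [s [Hs Hl]] := path_to q.
    have Hs' : path e p0 (rcons s x) by rewrite rcons_path Hs Hl.
    rewrite -lez_nat -HL (Hlr0 _ _ Hs' (last_rcons _ _ _)) delay_rcons Hl addrA.
    rewrite -(Hlr0 _ _ Hs Hl) HL -addn1 PoszD lerD //; exact: ominus_le1.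
  rewrite !HLS; case Hq: (q \in ch k); case Hx: (x \in ch k) => /=.
  - by rewrite !addn1 ltnS; exact: IH.
  - by rewrite addn0 addn1; apply: leq_trans (IH _ _ Hex) _.
  - have Hxq : e x q by rewrite e_sym.
    by case: (NB k IH x q Hx Hxq) => [->|[-> _]]; rewrite addn0 addn1.
  - by rewrite !addn0; exact: IH.
have HU1 : (Posz (cr (gam 0%N) p0 + D + 1) <= U * Posz rho.+1)%R by rewrite !PoszD.
case: U HU1 Ht {HU Ht_min} => [u|u] HU Ht; last first.
  rewrite NegzE mulNr -PoszM in HU.
  have : (Posz (cr (gam 0%N) p0 + D + 1) <= 0)%R.
    by apply: le_trans HU _; rewrite oppr_le0.
  by rewrite lez_nat addn1.
rewrite -PoszM lez_nat in HU; rewrite -PoszM -PoszD in Ht.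
set N := u * rho.+1 in HU Ht.
have HtL : L t p = N + rho by apply/eqP; rewrite -eqz_nat -HL Ht.
have L0 : forall q, L 0 q < N.
  move=> q; apply: leq_trans HU; rewrite addn1 ltnS.
  case: HD => HD1 _; case/inballP: (HD1 p0 q) => s [Hs Hl Hsz].
  rewrite -lez_nat -HL (Hlr0 _ _ Hs Hl) PoszD lerD //.
  by apply: (le_trans (delay_le_size _ _ _ _ _)); rewrite lez_nat.
set agg := fun q j => \big[oAC opA opC/None]_(y | inball e j q y) Some (v0 y).
have agg0 : forall q, agg q 0 = Some (v0 q).
  move=> q; rewrite /agg (eq_bigl (fun y => y == q)); first by rewrite big_pred1_eq.
  by move=> y; rewrite inball0.
have INV : forall k q, N <= L k q <= N + rho ->
    Some (cv2 (gam k) q) = agg q (L k q - N) /\ Some (cv1 (gam k) q) = agg q (L k q - N).-1.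
  elim=> [|k IH] q.
    by rewrite leqNgt L0.
  rewrite HLS Hstep /=; case Hq: (q \in ch k) => /=; last first.
    by rewrite addn0; exact: IH.
  rewrite addn1 => /andP [Hlo Hhi].
  have Hmod : cr (gam k) q %% rho.+1 = L k q %% rho.+1 by rewrite I1 (modn_dvdm _ dvd_M).
  case: (ltnP (L k q) N) => HN.
    have HLN : (L k q).+1 = N by apply/eqP; rewrite eqn_leq HN Hlo.
    have Hr : L k q %% rho.+1 = rho.
      have h1 : (L k q %% rho.+1).+1 %% rho.+1 = 0.
        by rewrite -addn1 modnDml addn1 HLN /N modnMl.
      have h2 : L k q %% rho.+1 < rho.+1 by rewrite ltn_mod.
      apply/eqP; rewrite eqn_leq -ltnS h2 /= leqNgt; apply/negP => h3.
      by rewrite modn_small in h1.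
    by rewrite Hmod Hr eqxx HLN subnn agg0.
  set j := L k q - N.
  have HLj : L k q = N + j by rewrite subnKC.
  have jr : j < rho by rewrite -(ltn_add2l N) -HLj.
  have Hr : L k q %% rho.+1 = j.
    by rewrite HLj /N modnMDl modn_small // (leq_trans jr).
  rewrite Hmod Hr ltn_eqF // subSn // -/j.
  split; last first.
    by case: (IH q) => //; rewrite HN /= (leq_trans (leqnSn _) Hhi).
  rewrite some_foldr -map_comp.
  have -> : [seq (Some \o (fun q0 => if cr (gam k) q0 == cr (gam k) q
                               then cv2 (gam k) q0 else cv1 (gam k) q0)) x | x <- enum (e q)]
          = [seq agg x j | x <- enum (e q)].
    apply/eq_in_map => x; rewrite mem_enum => Hex /=.
    case: (NB k (I2 k) q x Hq Hex) => [HLx|[HLx Hne]].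
      rewrite !I1 HLx eqxx.
      case: (IH x); first by rewrite HLx HN /= (leq_trans (leqnSn _) Hhi).
      by rewrite HLx -/j => -> _.
    rewrite (negbTE Hne).
    case: (IH x); first by rewrite HLx Hlo Hhi.
    by rewrite HLx subSn // -/j => _ ->.
  rewrite -(big_has _ _ opA opC opI _ (fun y => Some (v0 y)) _ (fun x y => inball e j x y)).
  rewrite -agg0 /agg.
  rewrite -(big_union _ _ opA opC opI _ (fun y => Some (v0 y)) (fun y => inball e 0 q y)).
  apply: eq_bigl => y; by rewrite inballS inball0.
case: (INV t p); first by rewrite HtL leq_addr leqnn.
by rewrite HtL addKn.
Qed.
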